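(* For $d\ge2$, the permutation $\pi=(d,d-1,\dots,2,1)$ on $\mathcal{A}=\{a_1,\dots,a_d\}$ given by $\pi_0(a_i)=i$, $\pi_1(a_i)=d+1-i$, is transposition Lagrangian: the vectors $\mathbf{v}_{\mathcal{B}}$, $\mathcal{B}$ ranging over the orbits of size two of $\pi_{\mathcal{A}}$, span a subspace of dimension equal to the number of such orbits, and this number equals $g(\pi)$.
   Context: For $\pi=(\pi_0,\pi_1)$, define $\Omega=\Omega_\pi$ by $\Omega_{\alpha,\beta}=1$ if $\pi_0(\alpha)<\pi_0(\beta)$ and $\pi_1(\alpha)>\pi_1(\beta)$, $-1$ if $\pi_0(\alpha)>\pi_0(\beta)$ and $\pi_1(\alpha)<\pi_1(\beta)$, $0$ otherwise; $g(\pi)=\tfrac12\mathrm{rank}(\Omega_\pi)$ (the genus). Let $\pi_{\mathcal{A}}=\pi_0^{-1}\circ\pi_1:\mathcal{A}\to\mathcal{A}$, $\mathbf{e}_{\mathcal{B}}=\sum_{\alpha\in\mathcal{B}}\mathbf{e}_\alpha$ and $\mathbf{v}_{\mathcal{B}}=\Omega\mathbf{e}_{\mathcal{B}}$. A self-inverse $\pi$ is transposition Lagrangian if $\dim\mathrm{span}\{\mathbf{v}_{\mathcal{B}}:\#\mathcal{B}=2\}=\#\{\text{orbits }\mathcal{B}\text{ with }\#\mathcal{B}=2\}=g(\pi)$. *)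

(* Defs.v *)
From HB Require Import structures.
From mathcomp Require Import all_boot all_order all_algebra all_fingroup.
Set Implicit Arguments. Unset Strict Implicit. Unset Printing Implicit Defensive.
Import Order.TTheory GRing.Theory Num.Theory.
Local Open Scope ring_scope.

(* Alphabet A = 'I_d ; a permutation pi = (pi0, pi1) of 'I_d (positions 0..d-1). *)

Definition Omega (d : nat) (pi0 pi1 : {perm 'I_d}) : 'M[rat]_d :=
  \matrix_(a, b)
    (if (pi0 a < pi0 b)%N && (pi1 a > pi1 b)%N then 1
     else if (pi0 a > pi0 b)%N && (pi1 a < pi1 b)%N then -1 else 0).

Definition genus (d : nat) (pi0 pi1 : {perm 'I_d}) : nat :=
  (\rank (Omega pi0 pi1))./2.

(* pi_A = pi0^{-1} o pi1 ; in mathcomp (s * t) x = t (s x) *)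
Definition piA (d : nat) (pi0 pi1 : {perm 'I_d}) : {perm 'I_d} :=
  (pi1 * pi0^-1)%g.

Definition eB (d : nat) (B : {set 'I_d}) : 'cV[rat]_d :=
  \col_i (i \in B)%:R.

Definition vB (d : nat) (pi0 pi1 : {perm 'I_d}) (B : {set 'I_d}) : 'cV[rat]_d :=
  Omega pi0 pi1 *m eB B.

Definition orbits2 (d : nat) (pi0 pi1 : {perm 'I_d}) : {set {set 'I_d}} :=
  [set B in porbits (piA pi0 pi1) | #|B| == 2%N].

Definition span_dim (d : nat) (pi0 pi1 : {perm 'I_d}) : nat :=
  \rank (\sum_(B in orbits2 pi0 pi1) <<(vB pi0 pi1 B)^T>>)%MS.

Definition self_inverse (d : nat) (pi0 pi1 : {perm 'I_d}) : Prop :=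
  (piA pi0 pi1 * piA pi0 pi1 = 1)%g.

Definition transposition_Lagrangian (d : nat) (pi0 pi1 : {perm 'I_d}) : Prop :=
  self_inverse pi0 pi1 /\
  span_dim pi0 pi1 = #|orbits2 pi0 pi1| /\
  #|orbits2 pi0 pi1| = genus pi0 pi1.

(* The permutation (d, d-1, ..., 1): pi0(a_i) = i, pi1(a_i) = d+1-i,
   shifted to 0-based positions: pi0 = id, pi1 = rev_ord. *)
Definition rev_pi0 (d : nat) : {perm 'I_d} := 1%g.
Definition rev_pi1 (d : nat) : {perm 'I_d} := perm (@rev_ord_inj d).

(* Main.v *)
Require Import Defs.
From HB Require Import structures.
From mathcomp Require Import all_boot all_order all_algebra all_fingroup.
From mathcomp Require Import zify ring.
Set Implicit Arguments. Unset Strict Implicit. Unset Printing Implicit Defensive.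
Import Order.TTheory GRing.Theory Num.Theory.
Local Open Scope ring_scope.

Ltac bsimp := repeat match goal with
  | |- context [(?x < ?y)%N] =>
      first [ have -> : (x < y)%N = true by lia | have -> : (x < y)%N = false by lia ]
  | |- context [(?x == ?y :> nat)] =>
      first [ have -> : (x == y :> nat) = true by lia | have -> : (x == y :> nat) = false by lia ]
  end.

Lemma tri_rank n p (A : 'M[rat]_(n, p)) (f : 'I_n -> 'I_p) :
  (forall i j : 'I_n, (i < j)%N -> A i (f j) = 0) ->
  (forall i, A i (f i) != 0) -> (n <= \rank A)%N.
Proof.
move=> Hz Hd.
pose S : 'M[rat]_(p, n) := \matrix_(k, j) (k == f j)%:R.
suff E : \rank (A *m S) = n.
  by apply: leq_trans (mxrankM_maxl A S); rewrite E.
  have HT : is_trig_mx (A *m S).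
    apply/is_trig_mxP => i j lij; rewrite !mxE (bigD1 (f j)) //= big1 ?addr0.
      by rewrite mxE eqxx mulr1 Hz.
    by move=> k /negbTE nk; rewrite mxE nk mulr0.
  rewrite mxrank_unit // unitmxE det_trig // unitfE.
  apply/prodf_neq0 => i _; rewrite !mxE (bigD1 (f i)) //= big1 ?addr0.
    by rewrite mxE eqxx mulr1.
  by move=> k /negbTE nk; rewrite mxE nk mulr0.
Qed.

Lemma rank_sum_le (I : finType) (P : pred I) p (M : I -> 'M[rat]_p) :
  (\rank (\sum_(i | P i) M i)%MS <= \sum_(i | P i) \rank (M i))%N.
Proof.
apply: (big_ind2 (fun (A : 'M[rat]_p) (k : nat) => \rank A <= k)%N).
- by rewrite mxrank0.
- move=> A1 k1 A2 k2 h1 h2; apply: leq_trans (leq_add h1 h2).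
  by rewrite mxrank_adds_leqif.
- by [].
Qed.

Lemma porbit_inv (T : finType) (s : {perm T}) x : s (s x) = x -> porbit s x = [set x; s x].
Proof.
move=> hs; apply/setP => y; rewrite !inE; apply/porbitP/idP.
  move=> [i ->]; rewrite permX; elim: i => [|i IH] /=; first by rewrite eqxx.
  by move/orP: IH => [/eqP ->|/eqP ->]; rewrite ?hs ?eqxx ?orbT.
move/orP => [/eqP ->|/eqP ->]; first by exists 0%N; rewrite expg0 perm1.
by exists 1%N; rewrite expg1.
Qed.

Section S.
Variable d : nat.
Local Notation Om := (Omega (rev_pi0 d) (rev_pi1 d)).

Lemma OmE (a b : 'I_d) : Om a b = if (a < b)%N then 1 else if (b < a)%N then -1 else 0.
Proof.
rewrite /Omega mxE /rev_pi0 /rev_pi1 !perm1 !permE /=.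
have ha := ltn_ord a; have hb := ltn_ord b.
by case: (ltngtP a b) => h; bsimp.
Qed.

Lemma wsub (k k1 : 'I_d) : k1 = k.+1 :> nat ->
  (\row_(j < d) ((j == k :> nat)%:R + (j == k.+1 :> nat)%:R : rat) <= Om)%MS.
Proof.
move=> hk.
have -> : \row_(j < d) ((j == k :> nat)%:R + (j == k.+1 :> nat)%:R : rat) = row k Om - row k1 Om.
  apply/rowP => j; rewrite !mxE /rev_pi0 /rev_pi1 !perm1 !permE /= hk.
  have hk1 := ltn_ord k1; have hj := ltn_ord j.
  case: (ltngtP j k) => h1; try (case: (ltngtP j k.+1) => h2); try (exfalso; lia); bsimp; rewrite /=; ring.
by apply: addmx_sub; rewrite ?scaleN1r; [exact: row_sub | rewrite -scaleN1r; apply: scalemx_sub; exact: row_sub].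
Qed.

Lemma qsub k : (k.+1 < d)%N ->
  (\row_(j < d) ((j == 0%N :> nat)%:R + (-1)^+k * (j == k.+1 :> nat)%:R : rat) <= Om)%MS.
Proof.
elim: k => [|k IH] hk.
  have h0 : (0 < d)%N by lia.
  have -> : (\row_(j < d) ((j == 0%N :> nat)%:R + (-1)^+0 * (j == 1%N :> nat)%:R : rat))
     = \row_(j < d) ((j == Ordinal h0 :> nat)%:R + (j == (Ordinal h0).+1 :> nat)%:R).
    by apply/rowP => j; rewrite !mxE expr0 mul1r.
  exact: (wsub (k := Ordinal h0) (k1 := Ordinal hk)).
have h1 : (k.+1 < d)%N by lia.
have W := wsub (k := Ordinal h1) (k1 := Ordinal hk) erefl.
have -> : (\row_(j < d) ((j == 0%N :> nat)%:R + (-1)^+k.+1 * (j == k.+2 :> nat)%:R : rat))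
   = \row_(j < d) ((j == 0%N :> nat)%:R + (-1)^+k * (j == k.+1 :> nat)%:R : rat)
     + (-1)^+k.+1 *: \row_(j < d) ((j == Ordinal h1 :> nat)%:R + (j == (Ordinal h1).+1 :> nat)%:R).
  by apply/rowP => j; rewrite !mxE /= exprS; ring.
by apply: addmx_sub; [exact: IH | exact: scalemx_sub].
Qed.

Lemma usub : (2 <= d)%N ->
  (\row_(j < d) (- (j == 0%N :> nat)%:R + (j == d.-1 :> nat)%:R : rat) <= Om)%MS.
Proof.
move=> hd.
have h0 : (0 < d)%N by lia.
have h1 : (d.-1 < d)%N by lia.
have -> : (\row_(j < d) (- (j == 0%N :> nat)%:R + (j == d.-1 :> nat)%:R : rat))
   = row (Ordinal h0) Om + row (Ordinal h1) Om.
  apply/rowP => j; rewrite !mxE /rev_pi0 /rev_pi1 !perm1 !permE /=.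
  have hj := ltn_ord j.
  case: (ltngtP j 0) => h2; try (case: (ltngtP j d.-1) => h3); try (exfalso; lia); bsimp; rewrite /=; ring.
by apply: addmx_sub; exact: row_sub.
Qed.

Lemma e0sub : ~~ odd d -> (2 <= d)%N ->
  (\row_(j < d) ((j == 0%N :> nat)%:R : rat) <= Om)%MS.
Proof.
move=> hodd hd.
have [n hn] : exists n, d = n.+2 by exists (d - 2)%N; lia.
have hq := qsub (k := n) ltac:(lia).
have hu := usub hd.
have hs : (-1) ^+ n = (1 : rat).
  rewrite -signr_odd; move: hodd; rewrite hn /=; case: (odd n) => //= _.
have -> : (\row_(j < d) ((j == 0%N :> nat)%:R : rat))
   = 2^-1 *: (\row_(j < d) ((j == 0%N :> nat)%:R + (-1)^+n * (j == n.+1 :> nat)%:R : rat)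
     - \row_(j < d) (- (j == 0%N :> nat)%:R + (j == d.-1 :> nat)%:R : rat)).
  apply/rowP => j; rewrite !mxE hs.
  have -> : (j == d.-1 :> nat) = (j == n.+1 :> nat) by have -> : d.-1 = n.+1 by lia.
  by rewrite /=; field.
apply: scalemx_sub; apply: addmx_sub => //.
by have := scalemx_sub (-1) hu; rewrite scaleN1r.
Qed.

Lemma eksub : ~~ odd d -> (2 <= d)%N -> forall k, (k < d)%N ->
  (\row_(j < d) ((j == k :> nat)%:R : rat) <= Om)%MS.
Proof.
move=> hodd hd; elim => [|k IH] hk; first exact: e0sub.
have h1 : (k < d)%N by lia.
have W := wsub (k := Ordinal h1) (k1 := Ordinal hk) erefl.
have -> : (\row_(j < d) ((j == k.+1 :> nat)%:R : rat))
   = \row_(j < d) ((j == Ordinal h1 :> nat)%:R + (j == (Ordinal h1).+1 :> nat)%:R)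
     - \row_(j < d) ((j == k :> nat)%:R : rat).
  by apply/rowP => j; rewrite !mxE /=; ring.
apply: addmx_sub => //.
by have := scalemx_sub (-1) (IH h1); rewrite scaleN1r.
Qed.

Lemma rank_even : ~~ odd d -> (2 <= d)%N -> \rank Om = d.
Proof.
move=> hodd hd; apply/eqP; rewrite eqn_leq rank_leq_row /=.
have : (1%:M <= Om)%MS.
  apply/row_subP => i; rewrite row1.
  have -> : delta_mx 0 i = \row_(j < d) ((j == i :> nat)%:R : rat).
    by apply/rowP => j; rewrite !mxE eqxx.
  exact: eksub.
by move/mxrankS; rewrite mxrank1.
Qed.

Lemma rank_low : (1 <= d)%N -> (d.-1 <= \rank Om)%N.
Proof.
move=> hd.
have hf : forall i : 'I_d.-1, (i.+1 < d)%N by move=> i; have := ltn_ord i; lia.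
have hg : forall i : 'I_d.-1, (i < d)%N by move=> i; have := ltn_ord i; lia.
pose A := \matrix_(i < d.-1, j < d) ((j == i :> nat)%:R + (j == i.+1 :> nat)%:R : rat).
have sA : (A <= Om)%MS.
  apply/row_subP => i.
  have -> : row i A = \row_(j < d) ((j == Ordinal (hg i) :> nat)%:R + (j == (Ordinal (hg i)).+1 :> nat)%:R).
    by apply/rowP => j; rewrite !mxE.
  exact: (wsub (k := Ordinal (hg i)) (k1 := Ordinal (hf i))).
apply: leq_trans (mxrankS sA).
apply: (tri_rank (f := fun i => Ordinal (hf i))).
  by move=> i j hij; rewrite !mxE /=; bsimp.
by move=> i; rewrite !mxE /=; bsimp.
Qed.

Lemma genusE : (2 <= d)%N -> genus (rev_pi0 d) (rev_pi1 d) = d./2.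
Proof.
move=> hd; rewrite /genus.
have hdd := odd_double_half d.
case ho : (odd d).
  have h1 := rank_low ltac:(lia).
  have h2 := rank_leq_row Om.
  have [->|->] : \rank Om = d.-1 \/ \rank Om = d by lia.
    have -> : d.-1 = (d./2).*2 by move: hdd; rewrite ho; lia.
    by rewrite doubleK.
  by [].
rewrite rank_even ?ho //.
Qed.

Lemma eBE (B : {set 'I_d}) l : eB B l 0 = (l \in B)%:R.
Proof. by rewrite /eB mxE. Qed.

Lemma vB2 (a b : 'I_d) k : a != b ->
  vB (rev_pi0 d) (rev_pi1 d) [set a; b] k 0 = Om k a + Om k b.
Proof.
move=> ab; rewrite /vB [LHS]mxE (bigD1 a) // (bigD1 b) /=; last by rewrite eq_sym.
rewrite big1 ?addr0; last first.
  by move=> l /andP [la lb]; rewrite eBE !inE (negbTE la) (negbTE lb) mulr0.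
by rewrite !eBE !inE !eqxx orbT /= !mulr1.
Qed.
End S.

Theorem mainTheorem10 (d : nat) (hd : (2 <= d)%N) :
  transposition_Lagrangian (rev_pi0 d) (rev_pi1 d).
Proof.
have piAE : piA (rev_pi0 d) (rev_pi1 d) = rev_pi1 d by rewrite /piA /rev_pi0 invg1 mulg1.
have sE : forall x, rev_pi1 d x = rev_ord x by move=> x; rewrite /rev_pi1 permE.
have orbE : forall x : 'I_d, porbit (rev_pi1 d) x = [set x; rev_ord x].
  by move=> x; rewrite porbit_inv sE // sE rev_ordK.
set m := d./2.
have hm : (m + m <= d <= m + m + 1)%N.
  have := odd_double_half d; rewrite -addnn -/m; case: odd => /=; lia.
have hmd : (m <= d)%N by lia.
pose g (i : 'I_m) : {set 'I_d} := [set widen_ord hmd i; rev_ord (widen_ord hmd i)].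
have gne : forall i, widen_ord hmd i != rev_ord (widen_ord hmd i).
  by move=> i; apply/eqP => /(congr1 val) /=; have := ltn_ord i; lia.
have gin : forall i, g i \in orbits2 (rev_pi0 d) (rev_pi1 d).
  move=> i; rewrite /orbits2 inE; apply/andP; split.
    by rewrite piAE; apply/imsetP; exists (widen_ord hmd i) => //; rewrite orbE.
  by rewrite cards2 gne.
have hA : (#|orbits2 (rev_pi0 d) (rev_pi1 d)| <= m)%N.
  have sub : orbits2 (rev_pi0 d) (rev_pi1 d) \subset g @: 'I_m.
    apply/subsetP => B; rewrite inE => /andP [/imsetP [x _ ->]]; rewrite piAE orbE cards2.
    move=> hx.
    have hx' : x != rev_ord x by move: hx; case: (x != rev_ord x).
    have hn : (x : nat) <> (d - x.+1)%N.
      by move=> e; move/eqP: hx'; apply; apply/val_inj; exact: e.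
    case: (ltnP x m) => hxm.
      apply/imsetP; exists (Ordinal hxm) => //; rewrite /g.
      by have -> : widen_ord hmd (Ordinal hxm) = x by apply/val_inj.
    have hr : (d - x.+1 < m)%N by have := ltn_ord x; lia.
    apply/imsetP; exists (Ordinal hr) => //; rewrite /g.
    have -> : widen_ord hmd (Ordinal hr) = rev_ord x by apply/val_inj.
    by rewrite rev_ordK setUC.
  apply: leq_trans (subset_leq_card sub) _.
  by apply: (leq_trans (leq_imset_card _ _)); rewrite card_ord.
have hC : (span_dim (rev_pi0 d) (rev_pi1 d) <= #|orbits2 (rev_pi0 d) (rev_pi1 d)|)%N.
  rewrite /span_dim; apply: leq_trans; first exact: rank_sum_le.
  rewrite -sum1_card; apply: leq_sum => B _.
  by rewrite mxrank_gen; apply: rank_leq_row.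
have hB : (m <= span_dim (rev_pi0 d) (rev_pi1 d))%N.
  pose V := \matrix_(i < m, k < d) vB (rev_pi0 d) (rev_pi1 d) (g i) k 0.
  have sV : (V <= \sum_(B in orbits2 (rev_pi0 d) (rev_pi1 d)) <<(vB (rev_pi0 d) (rev_pi1 d) B)^T>>)%MS.
    apply/row_subP => i; apply: (sumsmx_sup (g i)) => //.
    rewrite genmxE.
    have -> : row i V = (vB (rev_pi0 d) (rev_pi1 d) (g i))^T.
      by apply/rowP => k; rewrite !mxE.
    exact: submx_refl.
  rewrite /span_dim; apply: leq_trans (mxrankS sV).
  apply: (tri_rank (f := widen_ord hmd)).
    move=> i j hij; rewrite mxE vB2 // !OmE /=.
    have := ltn_ord j; have := ltn_ord i => hi hj.
    by bsimp; ring.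
  move=> i; rewrite mxE vB2 // !OmE /=.
  have := ltn_ord i => hi.
  by bsimp; rewrite add0r oner_neq0.
split.
  rewrite /Defs.self_inverse piAE; apply/permP => i.
  by rewrite permM !sE rev_ordK perm1.
have hG := genusE hd; rewrite -/m in hG.
rewrite hG; split; lia.
Qed.
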